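(* For every tree $T$ with at least one edge, $sr(T)=\lceil \Delta(T)/2\rceil$, where $\Delta(T)$ is the maximum degree of $T$.
   Context: All graphs are finite, simple and undirected. For a set $E'$ of edges of a graph, the subgraph induced by $E'$ is the graph whose edge set is $E'$ and whose vertex set is the set of endpoints of edges in $E'$. A graph is semiregular (a $[d,d+1]$-graph) if there is an integer $d$ such that every vertex has degree $d$ or $d+1$. The semiregular number $sr(G)$ of a graph $G$ is the minimum number of subsets into which $E(G)$ can be partitioned so that the subgraph induced by each subset is semiregular. *)

(* Defs.v *)
From mathcomp Require Import all_boot.
Set Implicit Arguments. Unset Strict Implicit. Unset Printing Implicit Defensive.

Section Graphs.
Variable V : finType.

Definition simple_graph (e : rel V) : Prop := symmetric e /\ irreflexive e.

Definition edges (e : rel V) : {set {set V}} :=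
  [set [set x; y] | x in V, y in V & e x y].

Definition deg (e : rel V) (v : V) : nat := #|[set w | e v w]|.

Definition maxdeg (e : rel V) : nat := \max_(v : V) deg e v.

Definition connected (e : rel V) : Prop := forall x y : V, connect e x y.

(* a cycle: distinct vertices x :: p, at least 3 of them, consecutive ones
   adjacent, and the last adjacent to the first *)
Definition acyclic (e : rel V) : Prop :=
  forall (x : V) (p : seq V),
    ~ [&& path e x p, uniq (x :: p), 2 <= size p & e (last x p) x].

Definition tree (e : rel V) : Prop := simple_graph e /\ connected e /\ acyclic e.

Definition edeg (F : {set {set V}}) (v : V) : nat := #|[set E in F | v \in E]|.

(* the subgraph induced by F (vertex set = endpoints of edges of F) is
   semiregular: some d with every vertex of it of degree d or d+1 *)
Definition semiregular_edges (F : {set {set V}}) : Prop :=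
  exists d : nat, forall v : V, 0 < edeg F v -> edeg F v = d \/ edeg F v = d.+1.

(* E(G) can be partitioned into (at most) k classes, each inducing a
   semiregular subgraph; classes are the fibres of a labelling c *)
Definition sr_partition (e : rel V) (k : nat) : Prop :=
  exists c : {set V} -> 'I_k,
    forall i : 'I_k, semiregular_edges [set E in edges e | c E == i].

Definition is_sr (e : rel V) (s : nat) : Prop :=
  sr_partition e s /\ forall k, sr_partition e k -> s <= k.

End Graphs.

(* Main.v *)
Require Import Defs.
From mathcomp Require Import all_boot.
Set Implicit Arguments. Unset Strict Implicit. Unset Printing Implicit Defensive.

Section S.
Variable V : finType.
Implicit Types (e f : rel V).

Lemma set2_eq (a b x y : V) : [set x; y] = [set a; b] ->
  (x = a /\ y = b) \/ (x = b /\ y = a).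
Proof.
move=> H.
have hx : x \in [set a; b] by rewrite -H !inE eqxx.
have hy : y \in [set a; b] by rewrite -H !inE eqxx orbT.
have ha : a \in [set x; y] by rewrite H !inE eqxx.
have hb : b \in [set x; y] by rewrite H !inE eqxx orbT.
move: hx hy ha hb; rewrite !inE.
by do 4! case/orP=> /eqP ?; subst; auto.
Qed.

Lemma in_edges f E : E \in edges f -> exists x y, f x y /\ E = [set x; y].
Proof. by case/imset2P=> x y _; rewrite inE => /andP[_ h] ->; exists x, y. Qed.

Lemma edgesI f x y : f x y -> [set x; y] \in edges f.
Proof. by move=> h; apply/imset2P; exists x y => //; rewrite inE h. Qed.

Definition relF (F : {set {set V}}) : rel V :=
  fun x y => (x != y) && ([set x; y] \in F).

Lemma edeg_relF (F : {set {set V}}) v :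
  (forall E, E \in F -> exists a b, a != b /\ E = [set a; b]) ->
  edeg F v = deg (relF F) v.
Proof.
move=> H; rewrite /edeg /deg.
have -> : [set E in F | v \in E] = (fun w => [set v; w]) @: [set w | relF F v w].
  apply/setP => E; rewrite inE; apply/andP/imsetP.
  - case=> EF vE; have [a [b [ab EE]]] := H E EF; subst E.
    move: vE; rewrite !inE => /orP[]/eqP->.
      by exists b; rewrite // inE /relF ab.
    exists a; last by rewrite setUC.
    by rewrite inE /relF eq_sym ab setUC.
  - case=> w; rewrite inE /relF => /andP[vw EF] ->; split => //.
    by rewrite !inE eqxx.
rewrite card_in_imset // => w1 w2; rewrite !inE /relF => /andP[h1 _] /andP[h2 _].
case/set2_eq => [[_ ->]|[E1 E2]] //.
by rewrite E1 eqxx in h2.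
Qed.

Lemma edges_pairs e : irreflexive e -> forall E, E \in edges e ->
  exists a b, a != b /\ E = [set a; b].
Proof.
move=> ir E /in_edges [x [y [h ->]]]; exists x, y; split => //.
by apply/eqP => xy; subst; rewrite ir in h.
Qed.

Lemma relF_edges e : simple_graph e -> relF (edges e) =2 e.
Proof.
case=> sy ir x y; rewrite /relF; apply/andP/idP.
- case=> _ /in_edges [a [b [h /set2_eq [[-> ->]|[-> ->]]]]] //.
  by rewrite sy.
- move=> h; split; last exact: edgesI.
  by apply/eqP => xy; subst; rewrite ir in h.
Qed.

Lemma deg_edeg e : simple_graph e -> forall v, deg e v = edeg (edges e) v.
Proof.
move=> se v; rewrite (edeg_relF _ (edges_pairs (proj2 se))) /deg.
by apply: eq_card => w; rewrite !inE relF_edges.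
Qed.

Lemma deg_sum e k (c : {set V} -> 'I_k) : simple_graph e -> forall v,
  deg e v = \sum_(i < k) edeg [set E in edges e | c E == i] v.
Proof.
move=> se v; rewrite deg_edeg // /edeg -sum1_card.
rewrite (partition_big c xpredT) //=.
apply: eq_bigr => i _; rewrite -sum1_card.
by apply: eq_bigl => E; rewrite !inE andbAC.
Qed.


Lemma leaf f : symmetric f -> irreflexive f -> acyclic f ->
  forall x y, f x y -> exists u, deg f u = 1.
Proof.
move=> sy ir ac.
have walk : forall n (z y : V) (q : seq V), #|V| < n + size q ->
    path f z (y :: q) -> uniq (z :: y :: q) -> exists u, deg f u = 1.
  elim=> [|n IH] z y q.
    move=> hlt _ /card_uniqP hc.
    have := max_card (mem (z :: y :: q)); rewrite hc /= => h.
    by rewrite add0n in hlt; have := ltn_trans hlt (ltnW h); rewrite ltnn.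
  move=> hlt hp hu.
  case: (boolP (deg f z == 1)) => [/eqP h|hd]; first by exists z.
  have fzy : f z y by move: hp => /= /andP[].
  have : ~~ ([set w | f z w] \subset [set y]).
    apply: contra hd => hs; rewrite /deg.
    suff -> : [set w | f z w] = [set y] by rewrite cards1.
    apply/eqP; rewrite eqEsubset hs sub1set inE fzy //.
  case/subsetPn => w; rewrite !inE => fzw wy.
  case: (boolP (w \in z :: y :: q)) => win.
    move: win; rewrite !inE (negbTE wy) /=.
    case/orP => [/eqP wz|wq]; first by subst; rewrite ir in fzw.
    case/splitPr: wq hp hu => q1 q2 hp hu.
    exfalso; apply: (ac z (y :: rcons q1 w)).
    have e1 : y :: q1 ++ w :: q2 = rcons (y :: q1) w ++ q2 by rewrite cat_rcons.
    rewrite e1 cat_path in hp; case/andP: hp => hp _.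
    have hu' : uniq (z :: y :: rcons q1 w).
      move: hu; rewrite -cat_rcons -!cat_cons cat_uniq => /andP[] //.
    rewrite hp hu' /= size_rcons last_rcons sy fzw /=.
    by case: q1 {e1 hp hu hu'}.
  apply: (IH w z (y :: q)).
  - by rewrite /= addnS -addSn.
  - by rewrite /= sy fzw.
  - by rewrite cons_uniq win.
move=> x y fxy; apply: (walk #|V|.+1 x y [::]).
- by rewrite addn0.
- by rewrite /= fxy.
- rewrite /= inE andbT; apply/eqP => xy; subst; by rewrite ir in fxy.
Qed.


Lemma class_le2 e (F : {set {set V}}) : simple_graph e -> acyclic e ->
  F \subset edges e -> semiregular_edges F -> forall v, edeg F v <= 2.
Proof.
move=> se ac sF [d hd] v.
have pairs : forall E, E \in F -> exists a b, a != b /\ E = [set a; b].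
  by move=> E EF; apply: (edges_pairs (proj2 se)); apply: (subsetP sF).
case: (posnP (edeg F v)) => [->//|pos].
have sub : subrel (relF F) e.
  move=> x y /andP[xy h]; rewrite -(relF_edges se) /relF xy.
  exact: (subsetP sF).
have [E] : exists E, E \in [set E in F | v \in E].
  by apply/set0Pn; rewrite -card_gt0.
rewrite inE => /andP[EF _]; have [a [b [ab EE]]] := pairs E EF; subst E.
have rab : relF F a b by rewrite /relF ab.
have [u hu] : exists u, deg (relF F) u = 1.
  apply: (leaf _ _ _ rab).
  - by move=> x y; rewrite /relF eq_sym setUC.
  - by move=> x; rewrite /relF eqxx.
  - move=> x p /and4P[hp hu hs hl]; apply: (ac x p); apply/and4P; split => //.
      exact: (sub_path sub).
    exact: sub.
have hu' : edeg F u = 1 by rewrite (edeg_relF _ pairs).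
have := hd u; rewrite hu' => /(_ isT) hd1.
have d1 : d <= 1 by case: hd1 => h; rewrite -?h //; move: h => [<-].
by case: (hd v pos) => ->; rewrite ?ltnS // (leq_trans d1).
Qed.


Lemma edeg_le (F : {set {set V}}) v : edeg F v <= #|F|.
Proof. by apply: subset_leq_card; apply/subsetP => E; rewrite inE => /andP[]. Qed.

Lemma color_forest k : 0 < k -> forall n f, #|edges f| <= n ->
  symmetric f -> irreflexive f -> acyclic f -> (forall v, deg f v <= k.*2) ->
  exists c : {set V} -> 'I_k, forall i v,
    edeg [set E in edges f | c E == i] v <= 2.
Proof.
move=> kpos; elim=> [|n IH] f hn sy ir ac hdeg.
  have h0 : #|edges f| = 0 by apply/eqP; rewrite -leqn0.
  exists (fun _ => Ordinal kpos) => i v.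
  apply: (leq_trans (edeg_le _ _)); apply: (@leq_trans #|edges f|); last by rewrite h0.
  by apply: subset_leq_card; apply/subsetP => E; rewrite inE => /andP[].
case: (posnP #|edges f|) => [h0|].
  exists (fun _ => Ordinal kpos) => i v.
  apply: (leq_trans (edeg_le _ _)); apply: (@leq_trans #|edges f|); last by rewrite h0.
  by apply: subset_leq_card; apply/subsetP => E; rewrite inE => /andP[].
rewrite card_gt0 => /set0Pn [E0 /in_edges [x0 [y0 [f0 _]]]].
have [u hu] := leaf sy ir ac f0.
have [w Nu] : exists w, [set z | f u z] = [set w] by apply/cards1P; apply/eqP; exact: hu.
have fuw : f u w.
  have : w \in [set z | f u z] by rewrite Nu set11.
  by rewrite inE.
pose f' := fun x y => f x y && ([set x; y] != [set u; w]).
have sy' : symmetric f' by move=> x y; rewrite /f' sy [[set x; y]]setUC.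
have ir' : irreflexive f' by move=> x; rewrite /f' ir.
have sub : subrel f' f by move=> x y /andP[].
have ac' : acyclic f'.
  move=> x p /and4P[hp hu' hs hl]; apply: (ac x p); apply/and4P; split => //.
    exact: (sub_path sub).
  exact: sub.
have hdeg' : forall v, deg f' v <= k.*2.
  move=> v; apply: leq_trans (hdeg v); apply: subset_leq_card.
  by apply/subsetP => z; rewrite !inE => /andP[].
have hn' : #|edges f'| <= n.
  rewrite -ltnS; apply: leq_trans hn; apply: proper_card.
  apply/properP; split.
    apply/subsetP => E /in_edges [x [y [h ->]]]; exact: edgesI (sub _ _ h).
  exists [set u; w]; first exact: edgesI.
  apply/negP => /in_edges [x [y [/andP[_ h] hE]]].
  by rewrite hE eqxx in h.
have [c' hc'] := IH f' hn' sy' ir' ac' hdeg'.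
have se' : simple_graph f' by [].
have dlt : deg f' w < deg f w.
  apply: proper_card; apply/properP; split.
    by apply/subsetP => z; rewrite !inE => /andP[].
  exists u; first by rewrite inE sy.
  by rewrite inE /f' setUC eqxx andbF.
have [j hj] : exists j, edeg [set E in edges f' | c' E == j] w <= 1.
  case: (boolP [exists j, edeg [set E in edges f' | c' E == j] w <= 1]) => [/existsP//|].
  rewrite negb_exists => /forallP hall; exfalso.
  have : k.*2 <= deg f' w.
    rewrite (deg_sum c' se') -mul2n mulnC -[X in X * 2](card_ord k) -sum_nat_const.
    by apply: leq_sum => i _; have := hall i; rewrite -ltnNge.
  by move=> h; have := leq_trans (leq_ltn_trans h dlt) (hdeg w); rewrite ltnn.
pose c := fun E => if E == [set u; w] then j else c' E.
exists c => i v; rewrite /edeg.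
set A := [set E in [set E in edges f | c E == i] | v \in E].
set A' := [set E in [set E in edges f' | c' E == i] | v \in E].
have hA : forall E, E \in A -> E != [set u; w] -> E \in A'.
  move=> E; rewrite !inE /c => /andP[/andP[/in_edges [x [y [h ->]]] hc] hv] ne.
  by rewrite (negbTE ne) in hc; rewrite hc hv edgesI // /f' h ne.
case: (eqVneq v u) => [vu|vnu].
  subst v; apply: (@leq_trans 1) => //; rewrite -(cards1 [set u; w]).
  apply: subset_leq_card; apply/subsetP => E; rewrite !inE.
  case/andP=> /andP[/in_edges [x [y [h ->]]] _]; rewrite !inE.
  case/orP=> /eqP ux; subst.
    have : y \in [set z | f x z] by rewrite inE.
    by rewrite Nu inE => /eqP ->.
  have : x \in [set z | f y z] by rewrite inE sy.
  by rewrite Nu inE => /eqP ->; rewrite setUC.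
case: (boolP ((i == j) && (v == w))) => [/andP[/eqP ij /eqP vw]|hij].
  subst; apply: (@leq_trans (#|A'| + #|[set [set u; w]]|)).
    apply: (leq_trans _ (leq_card_setU _ _)); apply: subset_leq_card.
    apply/subsetP => E EA; rewrite inE; case: (eqVneq E [set u; w]) => [->|ne].
      by rewrite set11 orbT.
    by rewrite hA.
  by rewrite cards1 addn1 ltnS.
apply: leq_trans (hc' i v); apply: subset_leq_card; apply/subsetP => E EA.
case: (eqVneq E [set u; w]) => [Euw|ne]; last exact: hA.
exfalso; move: EA hij; rewrite Euw !inE /c eqxx eq_sym.
case/andP=> /andP[_ ->] /orP[/eqP vu'|->] //.
by rewrite vu' eqxx in vnu.
Qed.


End S.

Theorem theorem3 (V : finType) (e : rel V) :
  tree e -> (exists x y : V, e x y) ->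
  is_sr e (uphalf (maxdeg e)).
Proof.
move=> [se [_ ac]] [x [y exy]].
have [sy ir] := se.
split.
  have dpos : 0 < maxdeg e.
    rewrite /maxdeg; apply: leq_trans _ (@leq_bigmax _ (deg e) x).
    by rewrite /deg card_gt0; apply/set0Pn; exists y; rewrite inE.
  have kpos : 0 < uphalf (maxdeg e) by rewrite uphalf_gt0.
  have hdeg : forall v, deg e v <= (uphalf (maxdeg e)).*2.
    move=> v; rewrite /maxdeg; apply: (leq_trans (@leq_bigmax _ (deg e) v)).
    by rewrite -leq_uphalf_double.
  have [c hc] := color_forest kpos (leqnn _) sy ir ac hdeg.
  exists c => i; exists 1 => v pos.
  have := hc i v; move: pos; set m := edeg _ v.
  by case: m => [|[|[|m]]] //= _ _; auto.
move=> k [c hc].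
rewrite leq_uphalf_double; apply/bigmax_leqP => v _.
rewrite (deg_sum c se) -mul2n mulnC -[X in X * 2](card_ord k) -sum_nat_const.
apply: leq_sum => i _; apply: (class_le2 se ac) => //.
by apply/subsetP => E; rewrite inE => /andP[].
Qed.
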